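(* Let $n\geq 3$ and $m\geq 1$ be integers. Identify $\Delta_m^{3,2}=\mathrm{VR}(\{0,\ldots,m\}^3;2)$ with the subcomplex of $\Delta_m^{n,2}=\mathrm{VR}(\{0,\ldots,m\}^n;2)$ spanned by the vertices of the form $(v_1,v_2,v_3,0,\ldots,0)$. Then there exists a retraction $\Delta_m^{n,2}\to\Delta_m^{3,2}$.
   Context: $\{0,\ldots,m\}^k\subseteq\mathbb{Z}^k$ carries the Manhattan metric $d(x,y)=\sum_i |x_i-y_i|$. For a metric space $X$ and $r\geq 0$, $\mathrm{VR}(X;r)$ is the simplicial complex on $X$ whose simplices are the finite subsets of diameter at most $r$. *)

(* Defs.v *)
From mathcomp Require Import all_boot.
Set Implicit Arguments. Unset Strict Implicit. Unset Printing Implicit Defensive.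

Definition grid (k m : nat) := {ffun 'I_k -> 'I_m.+1}.

Definition manhattan (k m : nat) (x y : grid k m) : nat :=
  \sum_(i < k) ((x i - y i) + (y i - x i))%N.

Definition VR_simplex (k m r : nat) (s : {set grid k m}) : bool :=
  [forall x in s, forall y in s, manhattan x y <= r].

Definition VR_simplicial (k m r k' m' r' : nat) (f : grid k m -> grid k' m') : Prop :=
  forall s : {set grid k m}, VR_simplex r s -> VR_simplex r' (f @: s).

Definition embed3 (n m : nat) (v : grid 3 m) : grid n m :=
  [ffun i : 'I_n => if (i < 3)%N then v (inord i) else ord0].

(* Main.v *)
Require Import Defs.
From mathcomp Require Import all_boot.

Lemma proj_lip (n m : nat) (hn : (3 <= n)%N) (x y : grid n m) :
  manhattan ([ffun i : 'I_3 => x (widen_ord hn i)])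
            ([ffun i : 'I_3 => y (widen_ord hn i)]) <= manhattan x y.
Proof.
rewrite /manhattan.
set g := fun j : 'I_n => ((x j - y j) + (y j - x j))%N.
have -> : \sum_(i < 3) (([ffun i0 => x (widen_ord hn i0)] : grid 3 m) i -
       ([ffun i0 => y (widen_ord hn i0)] : grid 3 m) i +
      (([ffun i0 => y (widen_ord hn i0)] : grid 3 m) i -
       ([ffun i0 => x (widen_ord hn i0)] : grid 3 m) i))
   = \sum_(i < 3) g (widen_ord hn i).
  by apply: eq_bigr => i _; rewrite !ffunE.
rewrite -(big_imset g (h := widen_ord hn)) /=; last first.
  by move=> i j _ _ /(congr1 val) /= /val_inj.
rewrite [X in _ <= X](bigID (mem [set widen_ord hn i | i : 'I_3])) /=.
exact: leq_addr.
Qed.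

Theorem proposition4p12 (n m : nat) (hn : (3 <= n)%N) (hm : (1 <= m)%N) :
  exists f : grid n m -> grid 3 m,
    VR_simplicial 2 2 f /\ (forall v : grid 3 m, f (embed3 n v) = v).
Proof.
exists (fun x => [ffun i : 'I_3 => x (widen_ord hn i)]); split.
  move=> s /forallP Hs; apply/forallP => a; apply/implyP => /imsetP [x xs ->].
  apply/forallP => b; apply/implyP => /imsetP [y ys ->].
  apply: (leq_trans (proj_lip _ _ hn x y)).
  by move: (Hs x) => /implyP /(_ xs) /forallP /(_ y) /implyP /(_ ys).
move=> v; apply/ffunP => i; rewrite !ffunE /= ltn_ord.
by congr (v _); apply: val_inj; rewrite /= inordK.
Qed.
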